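(* Let $(D,v^* )$ be a neighbor-acyclic instance such that $D$ has no source. Then $v^*$ is a 3-king of $D$, i.e., every vertex of $D$ is reachable from $v^*$ by a directed path of length at most $3$.
   Context: A tournament is a digraph with exactly one arc between every pair of distinct vertices. An instance $(D,v^* )$ (tournament $D$, vertex $v^*$) is neighbor-acyclic if $D[N_{\mathrm{in}}(v^* )]$ and $D[N_{\mathrm{out}}(v^* )]$ are both acyclic. A source is a vertex of in-degree $0$. *)

(* Defs.v *)
From mathcomp Require Import all_boot.
Set Implicit Arguments. Unset Strict Implicit. Unset Printing Implicit Defensive.

(* A digraph on a finite vertex type V is given by its arc relation E:
   E x y  means there is an arc x -> y. *)

Definition tournament (V : finType) (E : rel V) : Prop :=
  (forall x, ~~ E x x) /\
  (forall x y, x != y -> (E x y || E y x) && ~~ (E x y && E y x)).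

Definition in_nbhd (V : finType) (E : rel V) (v : V) : {set V} := [set u | E u v].
Definition out_nbhd (V : finType) (E : rel V) (v : V) : {set V} := [set u | E v u].

Definition induced (V : finType) (E : rel V) (A : {set V}) : rel V :=
  fun x y => [&& x \in A, y \in A & E x y].

Definition acyclic (V : finType) (E : rel V) : Prop :=
  forall x y, E x y -> ~~ connect E y x.

Definition neighbor_acyclic (V : finType) (E : rel V) (v : V) : Prop :=
  acyclic (induced E (in_nbhd E v)) /\ acyclic (induced E (out_nbhd E v)).

Definition is_source (V : finType) (E : rel V) (v : V) : Prop :=
  forall u, ~~ E u v.

(* v is a k-king: every vertex is reachable from v by a directed path of
   length at most k (a walk of length <= k; a shortest such walk is a path). *)
Definition is_king (V : finType) (E : rel V) (k : nat) (v : V) : Prop :=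
  forall w, exists s : seq V, [/\ size s <= k, path E v s & last v s = w].

(* Main.v *)
Require Import Defs.
From mathcomp Require Import all_boot.

Theorem lemma3 (V : finType) (E : rel V) (vstar : V) :
  tournament E ->
  neighbor_acyclic E vstar ->
  (forall v : V, ~ is_source E v) ->
  is_king E 3 vstar.
Proof.
move=> [irr tot] [acI _] nosrc w.
have antis : forall x y, E x y -> E y x -> False.
  move=> x y Exy Eyx; have nxy : x != y.
    by apply/eqP=> exy; subst; move: (irr y); rewrite Exy.
  by move: (tot x y nxy); rewrite Exy Eyx.
have dich : forall x y, x != y -> ~~ E x y -> E y x.
  by move=> x y nxy; move: (tot x y nxy); case: (E x y); case: (E y x).
case: (eqVneq w vstar) => [->|nw]; first by exists [::].
case Evw: (E vstar w); first by exists [:: w]; rewrite /= Evw.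
have Ewv : E w vstar by apply: dich => //; [rewrite eq_sym | rewrite Evw].
set I := in_nbhd E vstar.
set F := induced E I.
have wI : w \in I by rewrite inE.
pose m := [arg min_(x < w in I) #|[set y | connect F y x]|].
have [mI minm] : m \in I /\ forall x, x \in I -> #|[set y | connect F y m]| <= #|[set y | connect F y x]|.
  by rewrite /m; case: arg_minnP => // x xI H; split.
have msrc : forall u, u \in I -> ~~ E u m.
  move=> u uI; apply/negP=> Eum.
  have Fum : F u m by rewrite /F /induced uI mI Eum.
  have := minm u uI.
  suff : #|[set y | connect F y u]| < #|[set y | connect F y m]| by move=> H1 H2; move: (leq_trans H1 H2); rewrite ltnn.
  apply: proper_card; apply/properP; split.
    apply/subsetP=> y; rewrite !inE => Hy.
    by apply: connect_trans Hy (connect1 Fum).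
  exists m; first by rewrite inE connect0.
  by rewrite inE; apply: acI Fum.
have [u Eum] : exists u, E u m.
  case: (boolP [exists u, E u m]) => [/existsP //|/existsPn H].
  by exfalso; apply: (nosrc m) => x; apply: H.
have uI : u \notin I by apply/negP=> uI; move: (msrc u uI); rewrite Eum.
have Emv : E m vstar by move: mI; rewrite inE.
have nuv : u != vstar by apply/eqP=> e; subst; apply: (antis _ _ Emv Eum).
have Evu : E vstar u.
  apply: dich => //; apply/negP=> Euv; move: uI; rewrite inE Euv.
  done.
case: (eqVneq w m) => [->|nwm].
  by exists [:: u; m]; rewrite /= Evu Eum.
have Emw : E m w.
  by apply: dich; [exact: nwm|exact: msrc].
by exists [:: u; m; w]; rewrite /= Evu Eum Emw.
Qed.
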